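(* Let $\Gamma$ be a group and let $\mathbb{K}$ be a field. Then the set of normal subgroups $N \subset \Gamma$ such that the group algebra $\mathbb{K}[\Gamma/N]$ is stably finite is closed (and hence compact) in $\mathcal{N}(\Gamma)$.
   Context: $\mathcal{N}(\Gamma)$ denotes the set of normal subgroups of $\Gamma$, viewed as a subset of $\mathcal{P}(\Gamma) = \{0,1\}^\Gamma$ with the prodiscrete (product of discrete) topology. A ring $R$ is stably finite if every square matrix over $R$ which is one-sided invertible is two-sided invertible. *)

(* Defs.v *)
From HB Require Import structures.
From mathcomp Require Import all_boot all_order all_algebra.
From mathcomp Require Import all_classical all_reals all_analysis.

Set Implicit Arguments.
Unset Strict Implicit.
Unset Printing Implicit Defensive.

Import GRing.Theory.
Local Open Scope ring_scope.

Section GroupAlgebraQuotient.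
Variables (K : fieldType) (G : groupType).

(* A subset of G, i.e. a point of P(G) = {0,1}^G. *)
Definition normal_subgroup (N : G -> bool) : Prop :=
  [/\ N 1%g,
      (forall x y, N x -> N y -> N (x * y)%g),
      (forall x, N x -> N (x^-1)%g) &
      (forall x g, N x -> N (g^-1 * x * g)%g)].

(* An element of the group algebra K[G/N] is represented by a finite formal
   sum  \sum_i c_i [h_i N]  (a list of pairs (c_i, h_i)).  Two formal sums
   denote the same element of K[G/N] iff, for every coset gN, the sums of
   the coefficients of the terms lying in gN agree. *)
Definition qalg := seq (K * G).

Definition coset_coeff (N : G -> bool) (s : qalg) (g : G) : K :=
  \sum_(p <- s | N (g^-1 * p.2)%g) p.1.

Definition qeq (N : G -> bool) (s t : qalg) : Prop :=
  forall g, coset_coeff N s g = coset_coeff N t g.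

Definition qmul (s t : qalg) : qalg :=
  [seq (p.1 * q.1, (p.2 * q.2)%g) | p <- s, q <- t].

Definition qmx n := 'I_n -> 'I_n -> qalg.

Definition qmx_mul n (A B : qmx n) : qmx n :=
  fun i k => flatten [seq qmul (A i j) (B j k) | j <- enum 'I_n].

Definition qmx_one n : qmx n :=
  fun i j => if i == j then [:: (1, 1%g)] else [::].

Definition qmx_eq N n (A B : qmx n) : Prop := forall i j, qeq N (A i j) (B i j).

Definition quot_alg_stably_finite (N : G -> bool) : Prop :=
  forall n (A B : qmx n),
    qmx_eq N (qmx_mul A B) (@qmx_one n) -> qmx_eq N (qmx_mul B A) (@qmx_one n).

End GroupAlgebraQuotient.

(* Main.v *)
Require Import Defs.
From HB Require Import structures.
From mathcomp Require Import all_boot all_order all_algebra.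
From mathcomp Require Import all_classical all_reals all_analysis.

Local Open Scope classical_set_scope.

Section Alg.
Variables (K : fieldType) (G : groupType).
Local Open Scope group_scope.

Definition subgrp (N : G -> bool) : Prop :=
  [/\ N 1, (forall x y, N x -> N y -> N (x * y)) & (forall x, N x -> N (x^-1))].

Lemma normal_subgrp {N} : normal_subgroup N -> subgrp N.
Proof. by case=> h1 h2 h3 _; split. Qed.

Lemma cc_shift N (s : qalg K G) g a : subgrp N -> N (g^-1 * a) ->
  coset_coeff N s g = coset_coeff N s a.
Proof.
move=> [h1 hM hV] hga; apply: eq_bigl => p /=.
have E : a^-1 * p.2 = (g^-1 * a)^-1 * (g^-1 * p.2).
  by rewrite invgM -mulgA mulKg.
apply/idP/idP => hp.
  rewrite E; apply: hM => //; exact: hV.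
have E2 : g^-1 * p.2 = (g^-1 * a) * (a^-1 * p.2) by rewrite -mulgA mulVKg.
by rewrite E2; apply: hM.
Qed.

Lemma cc_zero N (s : qalg K G) g :
  (forall p, p \in s -> ~~ N (g^-1 * p.2)) -> coset_coeff N s g = 0%R.
Proof.
move=> h; rewrite /coset_coeff big_seq_cond big1 // => p /andP[ps np].
by move: (h p ps); rewrite np.
Qed.

Lemma qeq_local N (L : seq G) (s t : qalg K G) : subgrp N ->
  (forall p, p \in s ++ t -> p.2 \in L) ->
  qeq N s t <-> (forall a, a \in L -> coset_coeff N s a = coset_coeff N t a).
Proof.
move=> hN hL; split; first by move=> h a _; exact: h.
move=> h g.
case: (boolP (has (fun a => N (g^-1 * a)) L)).
  move=> /hasP[a aL ha].
  by rewrite (@cc_shift N s g a hN ha) (@cc_shift N t g a hN ha) h.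
move=> /hasPn hn.
rewrite !cc_zero // => p pin; apply: hn; apply: hL;
  by rewrite mem_cat pin ?orbT.
Qed.

Definition agree (N N' : G -> bool) (L : seq G) :=
  forall a b, a \in L -> b \in L -> N (a^-1 * b) = N' (a^-1 * b).

Lemma cc_agree N N' L (s : qalg K G) a : agree N N' L -> a \in L ->
  (forall p, p \in s -> p.2 \in L) -> coset_coeff N s a = coset_coeff N' s a.
Proof.
move=> hA aL hL; rewrite /coset_coeff big_seq_cond [RHS]big_seq_cond; apply: eq_bigl => p.
case: (boolP (p \in s)) => //= ps.
by rewrite hA // hL.
Qed.

Lemma qeq_transfer N N' L (s t : qalg K G) : subgrp N -> subgrp N' ->
  agree N N' L -> (forall p, p \in s ++ t -> p.2 \in L) ->
  qeq N s t -> qeq N' s t.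
Proof.
move=> hN hN' hA hL /(@qeq_local N L s t hN hL) h.
apply/(@qeq_local N' L s t hN' hL) => a aL.
have hs : forall p, p \in s -> p.2 \in L by move=> p ps; apply: hL; rewrite mem_cat ps.
have ht : forall p, p \in t -> p.2 \in L by move=> p ps; apply: hL; rewrite mem_cat ps orbT.
by rewrite -(@cc_agree N N' L s a hA aL hs) -(@cc_agree N N' L t a hA aL ht) h.
Qed.

Definition matL n (A B : qmx K G n) : seq G :=
  1 :: [seq p.2 | p <- flatten [seq qmx_mul A B ij.1 ij.2 ++ qmx_mul B A ij.1 ij.2
                                | ij <- [seq (i, j) | i <- enum 'I_n, j <- enum 'I_n]]].

Arguments matL {n}.

Lemma matL_AB n (A B : qmx K G n) i j p : p \in qmx_mul A B i j -> p.2 \in matL A B.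
Proof.
move=> hp; rewrite /matL in_cons; apply/orP; right; apply: map_f.
apply/flatten_mapP; exists (i, j); first by apply: (allpairs_f pair); rewrite mem_enum.
by rewrite mem_cat hp.
Qed.

Lemma matL_BA n (A B : qmx K G n) i j p : p \in qmx_mul B A i j -> p.2 \in matL A B.
Proof.
move=> hp; rewrite /matL in_cons; apply/orP; right; apply: map_f.
apply/flatten_mapP; exists (i, j); first by apply: (allpairs_f pair); rewrite mem_enum.
by rewrite mem_cat hp orbT.
Qed.

Lemma matL_one n (A B : qmx K G n) i j p : p \in @qmx_one K G n i j -> p.2 \in matL A B.
Proof.
rewrite /qmx_one; case: (i == j); rewrite ?inE // => /eqP -> /=.
by rewrite eqxx.
Qed.

Definition pairsL (L : seq G) : seq G := [seq a^-1 * b | a <- L, b <- L].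

Lemma stably_transfer N N' : subgrp N -> subgrp N' -> quot_alg_stably_finite K N' ->
  forall n (A B : qmx K G n), agree N N' (matL A B) ->
  qmx_eq N (qmx_mul A B) (@qmx_one K G n) -> qmx_eq N (qmx_mul B A) (@qmx_one K G n).
Proof.
move=> hN hN' hsf n A B hA hAB.
have hA' : agree N' N (matL A B) by move=> a b aL bL; rewrite hA.
have h1 : qmx_eq N' (qmx_mul A B) (@qmx_one K G n).
  move=> i j; apply: (@qeq_transfer N N' (matL A B) _ _ hN hN' hA _ (hAB i j)) => p.
  by rewrite mem_cat => /orP[]; [apply: matL_AB | apply: matL_one].
move: (hsf n A B h1) => h2 i j.
apply: (@qeq_transfer N' N (matL A B) _ _ hN' hN hA' _ (h2 i j)) => p.
by rewrite mem_cat => /orP[]; [apply: matL_BA | apply: matL_one].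
Qed.

End Alg.

Lemma nb1 (G : eqType) (f : {ptws G -> bool}) (x : G) :
  nbhs f [set g : {ptws G -> bool} | g x = f x].
Proof.
have := @proj_continuous G (fun=> bool) x f.
move=> /(_ [set f x]); apply.
rewrite /= nbhs_principalE.
by move=> y ->.
Qed.

Lemma nbs (G : eqType) (f : {ptws G -> bool}) (X : seq G) :
  nbhs f [set g : {ptws G -> bool} | forall x, x \in X -> g x = f x].
Proof.
elim: X => [|x X IH].
  have : nbhs f setT by exact: filterT.
  by apply: filterS.
have FF : Filter (nbhs f) by apply: prod_topology_filter.
apply: (filterS _ (filterI (@nb1 G f x) IH)).
move=> g [hx hX] y.
rewrite inE => /orP[/eqP -> //|]; exact: hX.
Qed.

(* N(Gamma) is viewed inside P(Gamma) = {0,1}^Gamma = {ptws Gamma -> bool}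
   (product of discrete topologies). *)
Theorem corollary1p5 (G : groupType) (K : fieldType) :
  let S : set {ptws G -> bool} :=
    [set N | normal_subgroup N /\ quot_alg_stably_finite K N] in
  closed S /\ compact S.
Proof.
move=> S.
have cS : closed S.
  move=> N0 hcl.
  have get : forall X : seq G, exists M, S M /\ (forall x, x \in X -> M x = N0 x).
    move=> X; have [M [SM BM]] := hcl _ (@nbs G N0 X); by exists M.
  have hN0 : normal_subgroup N0.
    split.
    - have [M [[[h1 _ _ _] _] BM]] := get [:: 1%g].
      by rewrite -BM ?inE.
    - move=> x y hx hy.
      have [M [[[_ hM _ _] _] BM]] := get [:: x; y; (x * y)%g].
      by rewrite -BM ?inE ?eqxx ?orbT //; apply: hM; rewrite BM ?inE ?eqxx ?orbT.
    - move=> x hx.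
      have [M [[[_ _ hV _] _] BM]] := get [:: x; (x^-1)%g].
      by rewrite -BM ?inE ?eqxx ?orbT //; apply: hV; rewrite BM ?inE ?eqxx ?orbT.
    - move=> x g hx.
      have [M [[[_ _ _ hC] _] BM]] := get [:: x; (g^-1 * x * g)%g].
      by rewrite -BM ?inE ?eqxx ?orbT //; apply: hC; rewrite BM ?inE ?eqxx ?orbT.
  split => //.
  move=> n A B hAB.
  have [M [[hM hsf] BM]] := get (@pairsL G (@matL K G n A B)).
  have h0 := normal_subgrp G hN0.
  have h1 := normal_subgrp G hM.
  apply: (@stably_transfer K G N0 M h0 h1 hsf n A B _ hAB).
  move=> a b aL bL; rewrite BM //.
  exact: (allpairs_f (fun a b => (a^-1 * b)%g)).
split => //.
have cT : compact [set: {ptws G -> bool}].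
  have h := @tychonoff G (fun=> bool) (fun=> setT) (fun=> bool_compact).
  suff <- : [set f : {ptws G -> bool} | forall i, [set: bool] (f i)] = setT by [].
  by apply/seteqP; split.
exact: (subclosed_compact cS cT).
Qed.
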